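(* Let $n\ge1$, $d\ge1$, $m\ge1$ be integers and $p\in(0,1)$. For integers $d_1,d_2,k$ put $$P(n,d_1,d_2,k,p)=n^{d_2-k}\left(1-p^{d_2}-p^{d_1}+2p^{d_1+d_2-k}\right)^m.$$ Then $$\max_{d_1,d_2,k}P(n,d_1,d_2,k,p)=\max_{0\le w\le d-1}\max\{P(n,d,d,w,p),\,P(n,w,d,w,p)\}=\max_{0\le w\le d-1}\max\left\{n^{d-w}(1-2p^d+2p^{2d-w})^m,\ n^{d-w}(1+p^d-p^w)^m\right\},$$ where the maximum on the left is over all integers $d_1,d_2,k$ with $0\le d_1,d_2\le d$ and $0\le k\le\min(d_1,d_2)$, excluding the triples with $d_1=d_2=k$, and $w$ ranges over integers. *)

(* Defs.v *)
From mathcomp Require Import all_boot all_order all_algebra.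
From mathcomp Require Import reals.
Set Implicit Arguments. Unset Strict Implicit. Unset Printing Implicit Defensive.
Import Order.TTheory GRing.Theory Num.Theory.
Local Open Scope ring_scope.

(* P(n,d1,d2,k,p) = n^(d2-k) * (1 - p^d2 - p^d1 + 2 p^(d1+d2-k))^m .
   Exponents are natural numbers; on the index range considered
   (k <= min d1 d2) the truncated subtractions are exact. *)
Definition Pfun {R : realType} (n m d1 d2 k : nat) (p : R) : R :=
  (n%:R) ^+ (d2 - k)%N * (1 - p ^+ d2 - p ^+ d1 + 2 * p ^+ (d1 + d2 - k)%N) ^+ m.

(* Main.v *)
Require Import Defs.
From mathcomp Require Import all_boot all_order all_algebra.
From mathcomp Require Import reals.
From mathcomp Require Import ring lra zify.
Import Order.TTheory GRing.Theory Num.Theory.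
Local Open Scope ring_scope.

Lemma base_ge0 {R : realDomainType} (t u v : R) :
  0 <= t -> t <= 1 -> 0 <= v -> v <= 1 -> 0 <= u -> u <= 1 ->
  0 <= 1 - t * v - t * u + 2 * (t * u * v).
Proof.
move=> t0 t1 v0 v1 u0 u1.
have h1 : 0 <= u * (1 - v) + v * (1 - u) by apply: addr_ge0; apply: mulr_ge0; lra.
have h2 : 0 <= (1 - t) * (u * (1 - v) + v * (1 - u)) by apply: mulr_ge0; lra.
have h3 : 0 <= (1 - u) * (1 - v) by apply: mulr_ge0; lra.
have h4 : 0 <= u * v by apply: mulr_ge0.
have -> : 1 - t * v - t * u + 2 * (t * u * v) =
   (1 - t) * (u * (1 - v) + v * (1 - u)) + (1 - u) * (1 - v) + u * v by ring.
lra.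
Qed.

Lemma base_le {R : realDomainType} (t q u v : R) :
  0 <= t -> t <= 1 -> 0 <= q -> q <= 1 -> 0 <= v -> v <= u -> u <= 1 ->
  (1 - t * v - t * u + 2 * (t * u * v) <= 1 - 2 * (t * q * v) + 2 * (t * q * v * v))
  \/ (1 - t * v - t * u + 2 * (t * u * v) <= 1 + t * q * v - t * q).
Proof.
move=> t0 t1 q0 q1 v0 vu u1.
have hf : 1 - t * v - t * u + 2 * (t * u * v) <= 1 - t*q*v - t*q*u + 2 * (t*q*u*v).
  have h1 : 0 <= u * (1 - v) + v * (1 - u) by apply: addr_ge0; apply: mulr_ge0; lra.
  have h2 : 0 <= t * (1 - q) * (u * (1 - v) + v * (1 - u)) by
    apply: mulr_ge0 => //; apply: mulr_ge0; lra.
  have -> : 1 - t*q*v - t*q*u + 2 * (t*q*u*v) = 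
    1 - t * v - t * u + 2 * (t * u * v) + t * (1 - q) * (u * (1 - v) + v * (1 - u)) by ring.
  lra.
have tq0 : 0 <= t * q by apply: mulr_ge0.
have [hv|hv] := lerP 0 (1 - 2 * v).
- left; apply: (le_trans hf).
  have : 0 <= t * q * (u - v) * (1 - 2 * v) by apply: mulr_ge0 => //; apply: mulr_ge0 => //; lra.
  move=> h; have -> : 1 - 2 * (t * q * v) + 2 * (t * q * v * v) =
    1 - t*q*v - t*q*u + 2 * (t*q*u*v) + t * q * (u - v) * (1 - 2 * v) by ring.
  lra.
- right; apply: (le_trans hf).
  have : 0 <= t * q * (1 - u) * (2 * v - 1).
    by apply: mulr_ge0; [apply: mulr_ge0 => //|]; lra.
  move=> h; have -> : 1 + t * q * v - t * q =
    1 - t*q*v - t*q*u + 2 * (t*q*u*v) + t * q * (1 - u) * (2 * v - 1) by ring.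
  lra.
Qed.

Lemma case_le (R : realType) (n m d d1 d2 k : nat) (p : R) :
  0 < p -> p < 1 -> (k <= d1)%N -> (d1 <= d2)%N -> (d2 <= d)%N ->
  Pfun n m d1 d2 k p <= Num.max (Pfun n m d d (k + (d - d2)) p) (Pfun n m (k + (d - d2)) d (k + (d - d2)) p).
Proof.
move=> p0 p1 kd1 d12 d2d.
have [x ex] : exists x, d1 = (k + x)%N by exists (d1 - k)%N; lia.
subst d1.
have [y ey] : exists y, d2 = (k + y)%N by exists (d2 - k)%N; lia.
have [e ee] : exists e, d = (k + e + y)%N by exists (d - d2)%N; lia.
have xy : (x <= y)%N by lia.
rewrite /Pfun.
have -> : (d2 - k = y)%N by lia.
have -> : (k + (d - d2))%N = (k + e)%N by lia.
have -> : (d - (k + e) = y)%N by lia.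
have -> : (d + d - (k + e) = k + e + y + y)%N by lia.
have -> : (k + e + d - (k + e) = k + e + y)%N by lia.
have -> : (k + x + d2 - k = k + x + y)%N by lia.
rewrite ey ee !exprD.
set t := p ^+ k; set q := p ^+ e; set u := p ^+ x; set v := p ^+ y.
have p0' : 0 <= p by apply: ltW.
have p1' : p <= 1 by apply: ltW.
have t0 : 0 <= t by apply: exprn_ge0.
have q0 : 0 <= q by apply: exprn_ge0.
have u0 : 0 <= u by apply: exprn_ge0.
have v0 : 0 <= v by apply: exprn_ge0.
have t1 : t <= 1 by apply: exprn_ile1.
have q1 : q <= 1 by apply: exprn_ile1.
have u1 : u <= 1 by apply: exprn_ile1.
have vu : v <= u by apply: ler_wiXn2l.
have n0 : 0 <= (n%:R : R) ^+ y by apply: exprn_ge0; apply: ler0n.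
have F0 := base_ge0 _ _ _ t0 t1 v0 (le_trans vu u1) u0 u1.
have E1 : 1 - t * u - t * v + 2 * (t * u * v) = 1 - t * v - t * u + 2 * (t * u * v) by ring.
have E2 : 1 - t * q * v - t * q * v + 2 * (t * q * v * v) = 1 - 2 * (t * q * v) + 2 * (t * q * v * v) by ring.
have E3 : 1 - t * q * v - t * q + 2 * (t * q * v) = 1 + t * q * v - t * q by ring.
rewrite E2 E3.
case: (base_le _ _ _ _ t0 t1 q0 q1 v0 vu u1) => h.
- rewrite le_max; apply/orP; left.
  by apply: ler_wpM2l => //; apply: lerXn2r; rewrite ?inE; last done; [done|apply: le_trans F0 h].
- rewrite le_max; apply/orP; right.
  by apply: ler_wpM2l => //; apply: lerXn2r; rewrite ?inE; last done; [done|apply: le_trans F0 h].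
Qed.

Lemma base_nn (R : realType) (d1 d2 k : nat) (p : R) :
  0 < p -> p < 1 -> (k <= d1)%N -> (k <= d2)%N ->
  0 <= 1 - p ^+ d2 - p ^+ d1 + 2 * p ^+ (d1 + d2 - k)%N.
Proof.
move=> p0 p1 h1 h2.
have [x ex] : exists x, d1 = (k + x)%N by exists (d1 - k)%N; lia.
have [y ey] : exists y, d2 = (k + y)%N by exists (d2 - k)%N; lia.
subst d1 d2.
have -> : (k + x + (k + y) - k = k + x + y)%N by lia.
rewrite !exprD.
have p0' : 0 <= p by apply: ltW.
have p1' : p <= 1 by apply: ltW.
have := base_ge0 (p ^+ k) (p ^+ x) (p ^+ y) (exprn_ge0 _ p0') (exprn_ile1 _ p0' p1')
  (exprn_ge0 _ p0') (exprn_ile1 _ p0' p1') (exprn_ge0 _ p0') (exprn_ile1 _ p0' p1').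
by [].
Qed.

Lemma key (R : realType) (n m d : nat) (p : R) (hn : (1 <= n)%N) (hd : (1 <= d)%N)
  (hp0 : 0 < p) (hp1 : p < 1) (d1 d2 k : 'I_d.+1) :
  (k <= minn d1 d2)%N -> ~~ ((d1 == d2 :> nat) && (d2 == k :> nat)) ->
  exists w : 'I_d, Pfun n m d1 d2 k p <= Num.max (Pfun n m d d w p) (Pfun n m w d w p).
Proof.
move=> hk hne.
have d1d : (d1 <= d)%N by rewrite -ltnS.
have d2d : (d2 <= d)%N by rewrite -ltnS.
have [le12|lt21] := leqP d1 d2.
- have kd1 : (k <= d1)%N by move: hk; rewrite leq_min => /andP[].
  have kd2 : (k < d2)%N.
    rewrite ltn_neqAle; move: hk; rewrite leq_min => /andP[_ ->]; rewrite andbT.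
    apply/negP => /eqP ek; move: hne; rewrite ek eqxx andbT; apply/negP/negPn.
    by apply/eqP; apply/anti_leq; rewrite le12 -ek kd1.
  have wd : (k + (d - d2) < d)%N by lia.
  exists (Ordinal wd) => /=.
  exact: case_le.
- have kd2 : (k <= d2)%N by move: hk; rewrite leq_min => /andP[].
  have wd : (k + (d - d1) < d)%N by lia.
  exists (Ordinal wd) => /=.
  apply: le_trans (@case_le R n m d d2 d1 k p hp0 hp1 kd2 (ltnW lt21) d1d).
  rewrite /Pfun addnC.
  rewrite [X in _ <= _ * (X + _) ^+ _]addrAC.
  apply: ler_wpM2r.
    by apply: exprn_ge0; rewrite addnC; apply: base_nn; lia.
  apply: ler_weXn2l; first by rewrite ler1n.
  lia.
Qed.

Lemma seed_le {R : realType} (I : Type) (r : seq I) (P : pred I) (F : I -> R) (s : R) :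
  s <= \big[Num.max/s]_(i <- r | P i) F i.
Proof.
apply: (big_rec (fun x => s <= x)) => // i x _ hx.
by rewrite le_max hx orbT.
Qed.

Theorem lemma2 (R : realType) (n d m : nat) (p : R)
  (hn : (1 <= n)%N) (hd : (1 <= d)%N) (hm : (1 <= m)%N)
  (hp0 : 0 < p) (hp1 : p < 1) :
  let s := Pfun n m d d 0 p in
  (\big[Num.max/s]_(d1 < d.+1) \big[Num.max/s]_(d2 < d.+1)
     \big[Num.max/s]_(k < d.+1 | ((k <= minn d1 d2)%N
                                  && ~~ ((d1 == d2 :> nat) && (d2 == k :> nat))))
        Pfun n m d1 d2 k p
   = \big[Num.max/s]_(w < d) Num.max (Pfun n m d d w p) (Pfun n m w d w p))
  /\
  (\big[Num.max/s]_(w < d) Num.max (Pfun n m d d w p) (Pfun n m w d w p)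
   = \big[Num.max/s]_(w < d)
       Num.max ((n%:R) ^+ (d - w)%N * (1 - 2 * p ^+ d + 2 * p ^+ (2 * d - w)%N) ^+ m)
               ((n%:R) ^+ (d - w)%N * (1 + p ^+ d - p ^+ w) ^+ m)).
Proof.
move=> s; split.
- apply/le_anti/andP; split.
  + have sle : s <= \big[Num.max/s]_(w < d) Num.max (Pfun n m d d w p) (Pfun n m w d w p).
      apply: le_trans (le_bigmax _ _ (Ordinal hd)).
      by rewrite le_max le_refl.
    apply: bigmax_le => // d1 _; apply: bigmax_le => // d2 _.
    apply: bigmax_le => // k /andP[hk hne].
    have [w hw] := @key R n m d p hn hd hp0 hp1 d1 d2 k hk hne.
    exact: le_trans hw (le_bigmax _ _ w).
  + apply: bigmax_le; first exact: seed_le.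
    move=> w _; rewrite ge_max; apply/andP; split.
    * apply: le_trans (le_bigmax _ _ ord_max).
      apply: le_trans (le_bigmax _ _ ord_max).
      have hw : (w < d.+1)%N by apply: ltnW; rewrite ltnS.
      apply: le_trans (@le_bigmax_cond _ _ _ _ (Ordinal hw) _ _ _) => //=.
      rewrite leq_min ltnW //= eqxx /= eq_sym.
      by rewrite neq_ltn ltn_ord.
    * have hw : (w < d.+1)%N by apply: ltnW; rewrite ltnS.
      apply: le_trans (le_bigmax _ _ (Ordinal hw)).
      apply: le_trans (le_bigmax _ _ ord_max).
      apply: le_trans (@le_bigmax_cond _ _ _ _ (Ordinal hw) _ _ _) => //=.
      rewrite leq_min leqnn ltnW //=.
      by rewrite (ltn_eqF (ltn_ord w)).
- apply: eq_bigr => w _; rewrite /Pfun.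
  have -> : (d + d - w = 2 * d - w)%N by lia.
  have -> : (w + d - w = d)%N by lia.
  congr (Num.max (_ * (_ ^+ _)) (_ * (_ ^+ _))); ring.
Qed.
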